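(* Let $X$ be a finite discrete space with at least two elements, $\Gamma$ a nonempty countable set, and $\varphi:\Gamma\to\Gamma$ a map having a non-quasi-periodic point. Then $(X^\Gamma,\sigma_\varphi)$ is uniform distributional chaotic.
   Context: $X^\Gamma$ has the product topology and a fixed compatible metric $d$; $\sigma_\varphi((x_\alpha)_{\alpha\in\Gamma})=(x_{\varphi(\alpha)})_{\alpha\in\Gamma}$. A point $\theta\in\Gamma$ is non-quasi-periodic if $\{\varphi^n(\theta):n\ge0\}$ is infinite. With $f=\sigma_\varphi$, $\xi(x,y,t,n)=\#\{i\in\{0,\dots,n-1\}:d(f^i(x),f^i(y))<t\}$, $F_{xy}(t)=\liminf_n\xi(x,y,t,n)/n$, $F^*_{xy}(t)=\limsup_n\xi(x,y,t,n)/n$. The system is uniform distributional chaotic if there exist an uncountable set $A\subseteq X^\Gamma$ and $\varepsilon>0$ such that for all distinct $x,y\in A$: $F^*_{xy}(s)=1$ for every $s>0$ and $F_{xy}(\varepsilon)=0$. *)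

(* Defs.v *)
From Stdlib Require Import Reals List.
From Coquelicot Require Import Coquelicot.
Open Scope R_scope.

Definition finite_type (X : Type) : Prop := exists l : list X, forall x : X, In x l.
Definition countable_type (G : Type) : Prop :=
  exists g : G -> nat, forall a b : G, g a = g b -> a = b.

Definition shift {X G : Type} (phi : G -> G) (x : G -> X) : G -> X :=
  fun a => x (phi a).

Definition non_quasi_periodic {G : Type} (phi : G -> G) (theta : G) : Prop :=
  ~ exists l : list G, forall n : nat, In (Nat.iter n phi theta) l.

Definition is_metric {T : Type} (d : T -> T -> R) : Prop :=
  (forall x y, 0 <= d x y) /\ (forall x y, d x y = 0 <-> x = y) /\
  (forall x y, d x y = d y x) /\ (forall x y z, d x z <= d x y + d y z).

Definition metric_open {T : Type} (d : T -> T -> R) (U : T -> Prop) : Prop :=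
  forall x, U x -> exists r, 0 < r /\ forall y, d x y < r -> U y.

(* open sets of the product topology on X^Gamma, X discrete:
   unions of cylinders fixing finitely many coordinates *)
Definition product_open {X G : Type} (U : (G -> X) -> Prop) : Prop :=
  forall x, U x -> exists F : list G,
    forall y, (forall a, In a F -> y a = x a) -> U y.

Definition compatible_metric {X G : Type} (d : (G -> X) -> (G -> X) -> R) : Prop :=
  is_metric d /\ forall U, product_open U <-> metric_open d U.

Definition xi {T : Type} (d : T -> T -> R) (f : T -> T) (x y : T) (t : R) (n : nat) : nat :=
  length (filter (fun i => if Rlt_dec (d (Nat.iter i f x) (Nat.iter i f y)) t
                           then true else false) (seq 0 n)).

Definition ratio {T : Type} d (f : T -> T) x y t : nat -> R :=
  fun n => INR (xi d f x y t n) / INR n.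

Definition Fl {T : Type} d (f : T -> T) x y t : Rbar := LimInf_seq (ratio d f x y t).
Definition Fu {T : Type} d (f : T -> T) x y t : Rbar := LimSup_seq (ratio d f x y t).

Definition uncountable {T : Type} (A : T -> Prop) : Prop :=
  ~ exists g : T -> nat, forall x y, A x -> A y -> g x = g y -> x = y.

Definition uniform_distributional_chaotic {T : Type} (d : T -> T -> R) (f : T -> T) : Prop :=
  exists (A : T -> Prop) (eps : R), 0 < eps /\ uncountable A /\
    forall x y, A x -> A y -> x <> y ->
      (forall s, 0 < s -> Fu d f x y s = Finite 1) /\ Fl d f x y eps = Finite 0.

(* Main.v *)
Require Import Defs.
From Stdlib Require Import Reals List Arith Lia Lra Psatz ClassicalEpsilon Classical FunctionalExtensionality.
From Coquelicot Require Import Coquelicot.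
Open Scope R_scope.

Lemma filter_len_le {A} (p : A -> bool) l : (length (filter p l) <= length l)%nat.
Proof. induction l; simpl; [lia|destruct (p a); simpl; lia]. Qed.

Lemma count_all_true (p : nat -> bool) L : forall m,
  (forall i, (m <= i < m + L)%nat -> p i = true) -> length (filter p (seq m L)) = L.
Proof.
  induction L; intros m H; simpl; auto.
  rewrite (H m) by lia. simpl. rewrite IHL; auto. intros i Hi; apply H; lia.
Qed.

Lemma count_all_false (p : nat -> bool) L : forall m,
  (forall i, (m <= i < m + L)%nat -> p i = false) -> length (filter p (seq m L)) = 0%nat.
Proof.
  induction L; intros m H; simpl; auto.
  rewrite (H m) by lia. apply IHL. intros i Hi; apply H; lia.
Qed.

Lemma seq3 m L R0 : seq 0 (m + L + R0) = seq 0 m ++ seq m L ++ seq (m + L) R0.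
Proof. rewrite seq_app, seq_app, app_assoc. reflexivity. Qed.

Lemma count_lower (p : nat -> bool) m L R0 :
  (forall i, (m <= i < m + L)%nat -> p i = true) ->
  (L <= length (filter p (seq 0 (m + L + R0))))%nat.
Proof.
  intros H. rewrite seq3, !filter_app, !length_app, (count_all_true p L m H). lia.
Qed.

Lemma count_upper (p : nat -> bool) m L R0 :
  (forall i, (m <= i < m + L)%nat -> p i = false) ->
  (length (filter p (seq 0 (m + L + R0))) <= m + R0)%nat.
Proof.
  intros H. rewrite seq3, !filter_app, !length_app, (count_all_false p L m H).
  pose proof (filter_len_le p (seq 0 m)). pose proof (filter_len_le p (seq (m+L) R0)).
  rewrite length_seq in *. lia.
Qed.

Lemma iter_shift {X G : Type} (phi : G -> G) (x : G -> X) i g :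
  Nat.iter i (shift phi) x g = x (Nat.iter i phi g).
Proof.
  revert g; induction i; intros g; simpl; auto.
  unfold shift at 1. rewrite IHi. rewrite <- Nat.iter_succ_r. reflexivity.
Qed.

Lemma th_inj {G : Type} (phi : G -> G) theta :
  non_quasi_periodic phi theta ->
  forall p q, Nat.iter p phi theta = Nat.iter q phi theta -> p = q.
Proof.
  intros Hnq.
  assert (K : forall p q, (p < q)%nat -> Nat.iter p phi theta = Nat.iter q phi theta -> False).
  { intros p q Hpq He. apply Hnq. exists (map (fun n => Nat.iter n phi theta) (seq 0 q)).
    intros n. induction n as [n IH] using (well_founded_induction lt_wf).
    destruct (Nat.lt_ge_cases n q) as [Hn|Hn].
    - apply (in_map (fun n => Nat.iter n phi theta)). apply in_seq. lia.
    - replace (Nat.iter n phi theta) with (Nat.iter (n - q + p) phi theta).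
      + apply IH. lia.
      + assert (Hn2 : n = ((n - q) + q)%nat) by lia.
        transitivity (Nat.iter (n - q) phi (Nat.iter p phi theta)).
        { rewrite <- Nat.iter_add. f_equal. }
        rewrite He, <- Nat.iter_add, <- Hn2. reflexivity. }
  intros p q He. destruct (Nat.lt_total p q) as [H|[H|H]]; auto.
  - exfalso; eapply K; eauto.
  - exfalso; eapply K; eauto.
Qed.

Lemma cantor : ~ exists h : (nat -> bool) -> nat, forall c c', h c = h c' -> c = c'.
Proof.
  intros [h Hh].
  set (inv := fun n => epsilon (inhabits (fun _ : nat => true)) (fun c => h c = n)).
  set (dg := fun k => negb (inv k k)).
  assert (E : inv (h dg) = dg).
  { apply Hh. unfold inv. apply (@epsilon_spec _ _ (fun c => h c = h dg)). eauto. }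
  assert (E2 : dg (h dg) = negb (inv (h dg) (h dg))) by reflexivity.
  rewrite E in E2. destruct (dg (h dg)); discriminate.
Qed.

Lemma key_ineq (Q : nat -> Prop) (eps : R) C N : 0 < eps ->
  (forall N', exists k, (N' <= k)%nat /\ Q k) ->
  exists k, (N <= k)%nat /\ Q k /\ (C + fact k < fact (S k))%nat /\
    INR (fact k + C) < eps * INR (fact (S k)).
Proof.
  intros He HQ.
  destruct (INR_unbounded (INR (C + 1) / eps)) as [K0 HK0].
  destruct (HQ (N + K0 + S C)%nat) as [k [Hk Qk]].
  exists k; split; [lia|split; auto].
  pose proof (lt_O_fact k) as Hf.
  assert (Hfs : fact (S k) = (S k * fact k)%nat) by reflexivity.
  split. { rewrite Hfs. nia. }
  rewrite Hfs, mult_INR.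
  assert (H1 : (fact k + C <= (C + 1) * fact k)%nat) by nia.
  apply le_INR in H1. rewrite mult_INR in H1.
  assert (H2 : INR (C + 1) < eps * INR (S k)).
  { assert (INR K0 <= INR (S k)) by (apply le_INR; lia).
    apply (Rmult_lt_compat_r eps) in HK0; auto.
    unfold Rdiv in HK0. rewrite Rmult_assoc, Rinv_l, Rmult_1_r in HK0 by lra.
    nra. }
  assert (0 < INR (fact k)) by (apply lt_0_INR; lia).
  nra.
Qed.
Definition jf k := (k - Nat.sqrt k * Nat.sqrt k)%nat.
Definition Bk (c : nat -> bool) k := match jf k with 0%nat => false | S j => c j end.
Definition Pc c l := exists k, (fact k <= l < fact (S k))%nat /\ Bk c k = true.
Definition th {G} (phi : G -> G) theta n := Nat.iter n phi theta.
Definition xx {X G} (phi : G -> G) theta (a b : X) c : G -> X := fun g =>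
  if excluded_middle_informative (exists n, g = th phi theta n /\ Pc c n) then b else a.
Definition EE {G} (phi : G -> G) theta g := exists j m, Nat.iter j phi g = th phi theta m.
Definition uu {X G} (phi : G -> G) theta (a b : X) : G -> X := fun g =>
  if excluded_middle_informative (EE phi theta g) then b else a.

Lemma jf_hit j N : exists k, (N <= k)%nat /\ jf k = j.
Proof.
  set (n := (N + j)%nat). exists (n * n + j)%nat.
  assert (Hs : Nat.sqrt (n * n + j) = n) by (apply Nat.sqrt_unique; unfold n; nia).
  split; [unfold n; nia|]. unfold jf. rewrite Hs. lia.
Qed.

Lemma Pc_block c k l : (fact k <= l < fact (S k))%nat -> (Pc c l <-> Bk c k = true).
Proof.
  intros Hl. split.
  - intros [k' [Hk' HB]].
    assert (k' = k).
    { destruct (Nat.lt_total k' k) as [H|[H|H]]; auto.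
      - pose proof (fact_le (S k') k ltac:(lia)). lia.
      - pose proof (fact_le (S k) k' ltac:(lia)). lia. }
    subst; auto.
  - intros HB. exists k; auto.
Qed.

Lemma JM_exists {G} (phi : G -> G) theta (F : list G) : exists J M, forall g, In g F ->
  EE phi theta g -> exists j m, (j <= J)%nat /\ (m <= M)%nat /\ Nat.iter j phi g = th phi theta m.
Proof.
  induction F as [|g0 F IH].
  - exists 0%nat, 0%nat. intros g [].
  - destruct IH as [J [M HJM]].
    destruct (classic (EE phi theta g0)) as [[j0 [m0 He]]|Hn].
    + exists (J + j0)%nat, (M + m0)%nat. intros g [<-|Hg] HE.
      * exists j0, m0. repeat split; auto; lia.
      * destruct (HJM g Hg HE) as [j [m [Hj [Hm Hjm]]]]. exists j, m. repeat split; auto; lia.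
    + exists J, M. intros g [<-|Hg] HE.
      * contradiction.
      * auto.
Qed.

Lemma window {X G} (phi : G -> G) theta (a b : X) (F : list G) J M c k i g :
  non_quasi_periodic phi theta ->
  (forall g, In g F -> EE phi theta g -> exists j m, (j <= J)%nat /\ (m <= M)%nat /\
     Nat.iter j phi g = th phi theta m) ->
  (fact k + J <= i)%nat -> (i + M < fact (S k))%nat -> In g F ->
  Nat.iter i (shift phi) (xx phi theta a b c) g =
    if Bk c k then uu phi theta a b g else a.
Proof.
  intros Hnq HJM Hi1 Hi2 Hg. rewrite iter_shift. unfold xx, uu.
  destruct (excluded_middle_informative (EE phi theta g)) as [HE|HE].
  - destruct (HJM g Hg HE) as [j [m [Hj [Hm Hjm]]]].
    assert (Hl : Nat.iter i phi g = th phi theta (i - j + m)).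
    { unfold th in *. transitivity (Nat.iter (i - j) phi (Nat.iter j phi g)).
      { rewrite <- Nat.iter_add. f_equal. lia. }
      rewrite Hjm, <- Nat.iter_add. reflexivity. }
    rewrite Hl.
    assert (HP : Pc c (i - j + m) <-> Bk c k = true) by (apply Pc_block; lia).
    destruct (excluded_middle_informative _) as [[n [Hn HPn]]|Hn].
    + apply th_inj in Hn; auto. subst n. apply HP in HPn. rewrite HPn. auto.
    + destruct (Bk c k) eqn:EB; auto. exfalso. apply Hn. exists (i - j + m)%nat.
      split; auto. apply HP; auto.
  - destruct (excluded_middle_informative _) as [[n [Hn HPn]]|Hn].
    + exfalso. apply HE. exists i, n. auto.
    + destruct (Bk c k); auto.
Qed.

Lemma cyl {X G} (d : (G -> X) -> (G -> X) -> R) : compatible_metric d ->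
  forall w r, 0 < r -> exists F : list G, forall y, (forall g, In g F -> y g = w g) -> d w y < r.
Proof.
  intros [[Hpos [Hz [Hsym Htri]]] Hop] w r Hr.
  assert (HU : metric_open d (fun y => d w y < r)).
  { intros y Hy. exists (r - d w y). split; [lra|]. intros y' Hy'.
    pose proof (Htri w y y'). lra. }
  apply Hop in HU. destruct (HU w) as [F HF].
  { assert (d w w = 0) by (apply Hz; auto). lra. }
  exists F. exact HF.
Qed.

Lemma xi_lower {T} (d : T -> T -> R) f x y t m L R0 :
  (forall i, (m <= i < m + L)%nat -> d (Nat.iter i f x) (Nat.iter i f y) < t) ->
  (L <= xi d f x y t (m + L + R0))%nat.
Proof.
  intros H. unfold xi. apply count_lower. intros i Hi.
  destruct (Rlt_dec _ _) as [_|Hn]; auto; exfalso; apply Hn, H; auto.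
Qed.

Lemma xi_upper {T} (d : T -> T -> R) f x y t m L R0 :
  (forall i, (m <= i < m + L)%nat -> ~ d (Nat.iter i f x) (Nat.iter i f y) < t) ->
  (xi d f x y t (m + L + R0) <= m + R0)%nat.
Proof.
  intros H. unfold xi. apply count_upper. intros i Hi.
  destruct (Rlt_dec _ _) as [Hn|_]; auto; exfalso; apply (H i); auto.
Qed.

Lemma xi_le_n {T} (d : T -> T -> R) f x y t n : (xi d f x y t n <= n)%nat.
Proof. unfold xi. pose proof (filter_len_le (fun i => if Rlt_dec (d (Nat.iter i f x) (Nat.iter i f y)) t then true else false) (seq 0 n)). rewrite length_seq in H. exact H. Qed.

Lemma ratio_bounds {T} (d : T -> T -> R) f x y t n : 0 <= ratio d f x y t n <= 1.
Proof.
  unfold ratio. pose proof (xi_le_n d f x y t n) as H.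
  destruct n.
  - assert (xi d f x y t 0 = 0%nat) by lia. rewrite H0. simpl. unfold Rdiv. rewrite Rmult_0_l. lra.
  - assert (0 < INR (S n)) by (apply lt_0_INR; lia).
    apply le_INR in H. pose proof (pos_INR (xi d f x y t (S n))).
    split.
    + apply Rdiv_le_0_compat; lra.
    + apply (Rmult_le_reg_r (INR (S n))); auto. unfold Rdiv.
      rewrite Rmult_assoc, Rinv_l, Rmult_1_r by lra. lra.
Qed.

Lemma ratio_big {T} (d : T -> T -> R) f x y t n C (del : R) :
  (C <= n)%nat -> (n - C <= xi d f x y t n)%nat -> INR C < del * INR n ->
  1 - del < ratio d f x y t n.
Proof.
  intros H1 H2 H3. unfold ratio.
  assert (0 < INR n).
  { destruct n. simpl in H3. pose proof (pos_INR C). lra. apply lt_0_INR; lia. }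
  apply le_INR in H2. rewrite minus_INR in H2 by auto.
  apply (Rmult_lt_reg_r (INR n)); auto. unfold Rdiv.
  rewrite Rmult_assoc, Rinv_l, Rmult_1_r by lra. lra.
Qed.

Lemma ratio_small {T} (d : T -> T -> R) f x y t n C (del : R) :
  (xi d f x y t n <= C)%nat -> INR C < del * INR n ->
  ratio d f x y t n < del.
Proof.
  intros H2 H3. unfold ratio.
  assert (0 < INR n).
  { destruct n. simpl in H3. pose proof (pos_INR C). lra. apply lt_0_INR; lia. }
  apply le_INR in H2.
  apply (Rmult_lt_reg_r (INR n)); auto. unfold Rdiv.
  rewrite Rmult_assoc, Rinv_l, Rmult_1_r by lra. lra.
Qed.

Lemma fact_ge k : (k <= fact k)%nat.
Proof. induction k; simpl; [lia|]. pose proof (lt_O_fact k). nia. Qed.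

Lemma Fu_one {X G} (phi : G -> G) theta (a b : X) d c c' s :
  non_quasi_periodic phi theta -> compatible_metric d -> 0 < s ->
  Fu d (shift phi) (xx phi theta a b c) (xx phi theta a b c') s = 1.
Proof.
  intros Hnq Hd Hs. pose proof Hd as [[Hpos [Hz [Hsym Htri]]] _].
  apply is_LimSup_seq_unique. intros del. split.
  - intros N.
    destruct (cyl d Hd (fun _ => a) (s/2)) as [F HF]; [lra|].
    destruct (JM_exists phi theta F) as [J [M HJM]].
    destruct (key_ineq (fun k => jf k = 0%nat) del (J + M) N) as [k [Hk [Q [Hlt Hin]]]].
    { apply cond_pos. }
    { intros N'. apply jf_hit. }
    exists (fact (S k)). split. { pose proof (fact_ge (S k)). lia. }
    assert (HB : forall c0, Bk c0 k = false) by (intros; unfold Bk; rewrite Q; auto).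
    apply (ratio_big _ _ _ _ _ _ (fact k + (J + M))); auto; [lia|].
    assert (E : (fact (S k) = (fact k + J) + (fact (S k) - (fact k + (J + M))) + M)%nat) by lia.
    rewrite E at 2.
    apply xi_lower. intros i Hi.
    assert (H1 : d (fun _ => a) (Nat.iter i (shift phi) (xx phi theta a b c)) < s/2).
    { apply HF. intros g Hg. rewrite (window phi theta a b F J M c k i g); auto; try lia.
      rewrite HB; auto. }
    assert (H2 : d (fun _ => a) (Nat.iter i (shift phi) (xx phi theta a b c')) < s/2).
    { apply HF. intros g Hg. rewrite (window phi theta a b F J M c' k i g); auto; try lia.
      rewrite HB; auto. }
    pose proof (Htri (Nat.iter i (shift phi) (xx phi theta a b c)) (fun _ => a)
                     (Nat.iter i (shift phi) (xx phi theta a b c'))).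
    rewrite (Hsym _ (fun _ => a)) in H. lra.
  - exists 0%nat. intros n _. pose proof (ratio_bounds d (shift phi) (xx phi theta a b c) (xx phi theta a b c') s n).
    pose proof (cond_pos del). lra.
Qed.

Lemma dzu_pos {X G} (phi : G -> G) theta (a b : X) d :
  a <> b -> compatible_metric d -> 0 < d (fun _ => a) (uu phi theta a b).
Proof.
  intros Hab [[Hpos [Hz _]] _].
  destruct (Rle_lt_or_eq_dec 0 _ (Hpos (fun _ => a) (uu phi theta a b))) as [H|H]; auto.
  exfalso. symmetry in H. apply Hz in H.
  assert (E : a = uu phi theta a b theta) by (rewrite <- H; auto).
  unfold uu in E. destruct (excluded_middle_informative _) as [_|Hn]; auto.
  apply Hn. exists 0%nat, 0%nat. reflexivity.
Qed.

Lemma far_exists {X G} (phi : G -> G) theta (a b : X) d c c' j :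
  a <> b -> non_quasi_periodic phi theta -> compatible_metric d -> c j <> c' j ->
  exists J M, forall k i, jf k = S j -> (fact k + J <= i)%nat -> (i + M < fact (S k))%nat ->
    ~ d (Nat.iter i (shift phi) (xx phi theta a b c)) (Nat.iter i (shift phi) (xx phi theta a b c'))
      < d (fun _ => a) (uu phi theta a b) / 3.
Proof.
  intros Hab Hnq Hd Hj. pose proof Hd as [[Hpos [Hz [Hsym Htri]]] _].
  pose proof (dzu_pos phi theta a b d Hab Hd) as Hp.
  set (z := fun _ : G => a). set (u := uu phi theta a b). fold z u in Hp.
  set (eps := d z u / 3).
  destruct (cyl d Hd z eps) as [Fz HFz]; [unfold eps; lra|].
  destruct (cyl d Hd u eps) as [Fu HFu]; [unfold eps; lra|].
  destruct (JM_exists phi theta (Fz ++ Fu)) as [J [M HJM]].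
  exists J, M. intros k i Hk Hi1 Hi2.
  assert (W : forall c0 g, In g (Fz ++ Fu) -> Nat.iter i (shift phi) (xx phi theta a b c0) g =
            if c0 j then u g else a).
  { intros c0 g Hg. rewrite (window phi theta a b (Fz ++ Fu) J M c0 k i g); auto.
    unfold Bk. rewrite Hk. reflexivity. }
  assert (Key : forall p q, d z p < eps -> d u q < eps -> ~ d p q < eps /\ ~ d q p < eps).
  { intros p q H1 H2. pose proof (Htri z p u). pose proof (Htri p q u).
    rewrite (Hsym q u) in *. rewrite (Hsym p q) in *. unfold eps in *. split; lra. }
  fold z u. fold eps.
  destruct (c j) eqn:Ec, (c' j) eqn:Ec'; try congruence.
  - apply (Key (Nat.iter i (shift phi) (xx phi theta a b c')) (Nat.iter i (shift phi) (xx phi theta a b c))).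
    + apply HFz. intros g Hg. rewrite W, Ec'; auto. apply in_or_app; auto.
    + apply HFu. intros g Hg. rewrite W, Ec; auto. apply in_or_app; auto.
  - apply (Key (Nat.iter i (shift phi) (xx phi theta a b c)) (Nat.iter i (shift phi) (xx phi theta a b c'))).
    + apply HFz. intros g Hg. rewrite W, Ec; auto. apply in_or_app; auto.
    + apply HFu. intros g Hg. rewrite W, Ec'; auto. apply in_or_app; auto.
Qed.

Lemma Fl_zero {X G} (phi : G -> G) theta (a b : X) d c c' j :
  a <> b -> non_quasi_periodic phi theta -> compatible_metric d -> c j <> c' j ->
  Fl d (shift phi) (xx phi theta a b c) (xx phi theta a b c') (d (fun _ => a) (uu phi theta a b) / 3) = 0.
Proof.
  intros Hab Hnq Hd Hj.
  destruct (far_exists phi theta a b d c c' j Hab Hnq Hd Hj) as [J [M HF]].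
  apply is_LimInf_seq_unique. intros del. split.
  - intros N.
    destruct (key_ineq (fun k => jf k = S j) del (J + M) N) as [k [Hk [Q [Hlt Hin]]]].
    { apply cond_pos. }
    { intros N'. apply jf_hit. }
    exists (fact (S k)). split. { pose proof (fact_ge (S k)). lia. }
    rewrite Rplus_0_l.
    apply (ratio_small _ _ _ _ _ _ (fact k + (J + M))); auto.
    assert (E : (fact (S k) = (fact k + J) + (fact (S k) - (fact k + (J + M))) + M)%nat) by lia.
    rewrite E. 
    match goal with |- (_ <= ?C)%nat => replace C with ((fact k + J) + M)%nat by lia end.
    apply xi_upper. intros i Hi. apply (HF k); auto; lia.
  - exists 0%nat. intros n _. pose proof (ratio_bounds d (shift phi) (xx phi theta a b c) (xx phi theta a b c') (d (fun _ => a) (uu phi theta a b) / 3) n).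
    pose proof (cond_pos del). lra.
Qed.

Lemma xx_inj {X G} (phi : G -> G) theta (a b : X) (d : (G -> X) -> (G -> X) -> R) c c' :
  a <> b -> non_quasi_periodic phi theta -> compatible_metric d ->
  xx phi theta a b c = xx phi theta a b c' -> c = c'.
Proof.
  intros Hab Hnq Hd He. apply NNPP. intros Hne.
  assert (Hj : exists j, c j <> c' j).
  { apply NNPP. intros Hn. apply Hne. apply functional_extensionality. intros j.
    apply NNPP. intros H. apply Hn. exists j; auto. }
  destruct Hj as [j Hj].
  destruct (far_exists phi theta a b d c c' j Hab Hnq Hd Hj) as [J [M HF]].
  destruct (key_ineq (fun k => jf k = S j) 1 (J + M) 0) as [k [Hk [Q [Hlt Hin]]]].
  { lra. } { intros N'. apply jf_hit. }
  apply (HF k (fact k + J)%nat Q); try lia.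
  rewrite He. pose proof Hd as [[_ [Hz _]] _].
  assert (H0 : d (Nat.iter (fact k + J) (shift phi) (xx phi theta a b c'))
     (Nat.iter (fact k + J) (shift phi) (xx phi theta a b c')) = 0) by (apply Hz; auto).
  rewrite H0. pose proof (dzu_pos phi theta a b d Hab Hd). lra.
Qed.

Theorem lemma3p4 (X G : Type) (phi : G -> G) :
  finite_type X -> (exists a b : X, a <> b) ->
  countable_type G -> inhabited G ->
  (exists theta : G, non_quasi_periodic phi theta) ->
  forall d : (G -> X) -> (G -> X) -> R, compatible_metric d ->
  uniform_distributional_chaotic d (shift phi).
Proof.
  intros _ [a [b Hab]] _ _ [theta Hnq] d Hd.
  exists (fun w => exists c, w = xx phi theta a b c), (d (fun _ => a) (uu phi theta a b) / 3).
  split; [pose proof (dzu_pos phi theta a b d Hab Hd); lra|].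
  split.
  - intros [g Hg]. apply cantor. exists (fun c => g (xx phi theta a b c)).
    intros c c' He. apply (xx_inj phi theta a b d); auto.
    apply Hg; eauto.
  - intros x y [c ->] [c' ->] Hne.
    assert (Hj : exists j, c j <> c' j).
    { apply NNPP. intros Hn. apply Hne. f_equal. apply functional_extensionality. intros j.
      apply NNPP. intros H. apply Hn. exists j; auto. }
    destruct Hj as [j Hj]. split.
    + intros s Hs. apply Fu_one; auto.
    + apply (Fl_zero phi theta a b d c c' j); auto.
Qed.
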